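(* Let $n\ge1$ and let $f\in\mathcal{G}_1$ be $n$-ary, $f=2x_1\cdots x_n\left(\sum_{i=1}^n a_ix_i^2+\sum_{i=1}^n b_ix_i+c\right)$, with $a_i\neq 0$ for some $i$. Then $2w_n\in C(f)$ or $2q_n\in C(f)$, where $w_n=x_1\cdots x_n(x_1^2+1)$ and $q_n=x_1^3x_2\cdots x_n$.
   Context: All operations are on $\mathbb{Z}_8$. $\mathcal{G}_1$ is the set of all operations (of any arity $n\ge1$) of the form $2x_1\cdots x_n\left(\sum_{i=1}^n a_ix_i^2+\sum_{i=1}^n b_ix_i+c\right)$ with $a_i,b_i\in\{0,1\}$ and $c\in\{0,1,2,3\}$. For an operation $f$, $C(f)$ denotes the clone generated by $f$ together with binary addition and all unary constant operations. *)

(* Defs.v *)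
From mathcomp Require Import all_boot all_algebra.
Set Implicit Arguments. Unset Strict Implicit. Unset Printing Implicit Defensive.
Import GRing.Theory.
Local Open Scope ring_scope.

(* The ring Z_8 (8 >= 2, so 'Z_8 is genuinely Z/8Z). *)
Definition Z8 := 'Z_8.

Definition op (n : nat) := ('I_n -> Z8) -> Z8.

(* C(f): the clone on Z_8 generated by f (of arity k), binary addition and
   all unary constant operations. *)
Inductive inC (k : nat) (f : op k) : forall n : nat, op n -> Prop :=
| inC_proj n (i : 'I_n) : inC f (fun x => x i)
| inC_gen : inC f f
| inC_add : inC f (fun x : 'I_2 -> Z8 => x ord0 + x ord_max)
| inC_const (c : Z8) : inC f (fun _ : 'I_1 -> Z8 => c)
| inC_comp m n (h : op m) (gs : 'I_m -> op n) :
    inC f h -> (forall j, inC f (gs j)) ->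
    inC f (fun x => h (fun j => gs j x))
| inC_ext n (g g' : op n) : inC f g -> (forall x, g x = g' x) -> inC f g'.

(* The member of G_1 with parameters a_i, b_i in {0,1}, c in {0,1,2,3}:
   2 x_1...x_n (sum a_i x_i^2 + sum b_i x_i + c). *)
Definition g1op (n : nat) (a b : 'I_n -> bool) (c : 'I_4) : op n :=
  fun x => 2 * (\prod_i x i) *
    (\sum_i (a i)%:R * x i ^+ 2 + \sum_i (b i)%:R * x i + (nat_of_ord c)%:R).

(* w_n = x_1...x_n (x_1^2 + 1), where i0 plays the role of index 1. *)
Definition w_op (n : nat) (i0 : 'I_n) : op n :=
  fun x => (\prod_i x i) * (x i0 ^+ 2 + 1).

(* q_n = x_1^3 x_2 ... x_n, where i0 plays the role of index 1. *)
Definition q_op (n : nat) (i0 : 'I_n) : op n :=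
  fun x => x i0 ^+ 3 * \prod_(i | i != i0) x i.

(* Main.v *)
Require Import Defs.
From mathcomp Require Import all_boot all_algebra.
From mathcomp Require Import ring.
From mathcomp Require Import perm.
Import GRing.Theory.
Local Open Scope ring_scope.

Definition Z8s : seq Z8 := [seq inZp i | i <- iota 0 8].

Lemma Z8sP (z : Z8) : z \in Z8s.
Proof.
have -> : z = inZp (val z) by rewrite valZpK.
apply: map_f; rewrite mem_iota /=; exact: ltn_ord z.
Qed.

Lemma brute2 (F G : Z8 -> Z8 -> Z8) :
  all (fun s => all (fun t => F s t == G s t) Z8s) Z8s -> forall s t, F s t = G s t.
Proof.
move/allP=> H s t; have /allP H2 := H s (Z8sP s); exact/eqP/H2/Z8sP.
Qed.

Lemma mul7 (z : Z8) : z *+ 7 = - z.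
Proof.
apply/eqP; rewrite -subr_eq0 opprK -mulrSr -mulr_natr pchar_Zp // mulr0 //.
Qed.

Section Clone.
Variables (k : nat) (f : op k) (n : nat) (p0 : 'I_n).

Lemma inC_addf (g h : op n) : inC f g -> inC f h -> inC f (fun x => g x + h x).
Proof.
move=> Hg Hh.
pose gs : 'I_2 -> op n := fun j => if j == ord0 then g else h.
have H : inC f (fun x => (fun y : 'I_2 -> Z8 => y ord0 + y ord_max) (fun j => gs j x)).
  apply: (@inC_comp _ f 2 n (fun y : 'I_2 -> Z8 => y ord0 + y ord_max) gs); first exact: inC_add.
  by move=> j; rewrite /gs; case: ifP.
by apply: (inC_ext H) => x /=; rewrite /gs eqxx.
Qed.

Lemma inC_constn (cc : Z8) : inC f (fun _ : 'I_n -> Z8 => cc).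
Proof.
have H : inC f (fun x => (fun _ : 'I_1 -> Z8 => cc) (fun j => (fun y : 'I_n -> Z8 => y p0) x)).
  apply: (@inC_comp _ f 1 n (fun _ : 'I_1 -> Z8 => cc) (fun _ => (fun y : 'I_n -> Z8 => y p0))); first exact: inC_const.
  by move=> j; exact: inC_proj.
by apply: (inC_ext H).
Qed.

Lemma inC_muln (g : op n) m : inC f g -> inC f (fun x => g x *+ m).
Proof.
move=> Hg; elim: m => [|m IH].
  by apply: (inC_ext (inC_constn 0)) => x; rewrite mulr0n.
eapply inC_ext; first exact: (inC_addf _ _ Hg IH).
by move=> x /=; rewrite mulrS.
Qed.

Lemma inC_bigseq (I : Type) (r : seq I) (P : pred I) (F : I -> op n) :
  (forall i, P i -> inC f (F i)) -> inC f (fun x => \sum_(i <- r | P i) F i x).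
Proof.
move=> HF; elim: r => [|i r IH].
  by apply: (inC_ext (inC_constn 0)) => x; rewrite big_nil.
case Pi: (P i).
  by apply: (inC_ext (inC_addf _ _ (HF i Pi) IH)) => x; rewrite big_cons Pi.
by apply: (inC_ext IH) => x; rewrite big_cons Pi.
Qed.

End Clone.

Definition al (u : Z8) := u ^+ 3 - u.
Definition be (u : Z8) := u ^+ 2 - u.

Definition L0 (i : nat) (s t : Z8) : Z8 :=
  match i with 0%N => s + 1 | 1%N => s + t | 2%N => 1 | 3%N => t | 4%N => s
  | 5%N => s | 6%N => s + t | _ => t end.
Definition L1 (i : nat) (s t : Z8) : Z8 :=
  match i with 0%N => t | 1%N => 1 | 2%N => t | 3%N => 1 | 4%N => 1 | _ => t end.
Definition lam2 (am bm : bool) (i : nat) : nat :=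
  nth 0%N (if am then (if bm then [:: 1;0;7;0;0;0;7;1] else [:: 0;5;0;3;7;1;7;1])
           else (if bm then [:: 3;1;3;1;7;1;0;0] else [::]))%N i.
Definition GG (am b0 bm : bool) (u v : Z8) :=
  2 * (u * v) * (u ^+ 2 + b0%:R * u + am%:R * v ^+ 2 + bm%:R * v).
Definition HH (u v : Z8) := 2 * (u * v).
Definition E1 (am bm : bool) (s t : Z8) := 2 * s * (am%:R * al t + bm%:R * be t).
Definition idx8 := [:: 0;1;2;3;4;5;6;7]%N.

Lemma gadG am b0 bm s t :
  \sum_(i <- idx8) GG am b0 bm (L0 i s t) (L1 i s t) *+ lam2 am bm i = E1 am bm s t.
Proof.
rewrite /idx8 !big_cons big_nil; move: s t.
by case: am; case: b0; case: bm; apply: brute2; vm_compute.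
Qed.

Lemma gadH am bm s t :
  \sum_(i <- idx8) HH (L0 i s t) (L1 i s t) *+ lam2 am bm i = 0.
Proof.
rewrite /idx8 !big_cons big_nil; move: s t.
by case: am; case: bm; apply: brute2; vm_compute.
Qed.

Definition Lu (i : nat) (u : Z8) : Z8 :=
  match i with 0%N => u | 1%N => u + 1 | 2%N => 1 | 3%N => u + u + u | _ => u + u end.
Definition lam1 (N : Z8) (bp : bool) (i : nat) : nat :=
  nth 0%N (let r := (nat_of_ord N %% 4)%N in
    if r == 0%N then (if bp then [:: 1;1;0;1;0] else [:: 0;0;0;1;1])
    else if r == 1%N then (if bp then [:: 0;1;3;0;0] else [:: 0;0;0;3;0])
    else if r == 2%N then (if bp then [:: 0;1;1;0;0] else [:: 0;0;0;1;0])
    else (if bp then [:: 0;3;1;0;0] else [:: 0;0;0;1;0]))%N i.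
Definition Targ (N u : Z8) := if odd N then u ^+ 3 else u * (u ^+ 2 + 1).
Definition idx5 := [:: 0;1;2;3;4]%N.

Lemma gadU (bp : bool) N u :
  \sum_(i <- idx5) (2 * (al (Lu i u) + bp%:R * be (Lu i u) + N * Lu i u)) *+ lam1 N bp i
  = 2 * Targ N u.
Proof.
rewrite /idx5 !big_cons big_nil; move: N u.
by case: bp; apply: brute2; vm_compute.
Qed.

Section Main.
Variables (n : nat) (a b : 'I_n -> bool) (c : 'I_4) (p : 'I_n).
Hypothesis ap : a p.

Definition Qx (x : 'I_n -> Z8) (j : 'I_n) := \prod_(i | i != j) x i.
Definition ee (j : 'I_n) (u : Z8) := (a j)%:R * al u + (b j)%:R * be u.
Definition Nc : Z8 := \sum_j ((a j)%:R + (b j)%:R) + (nat_of_ord c)%:R.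
Definition Em (m : 'I_n) : op n := fun x => 2 * Qx x m * ee m (x m).

Lemma prodD1 (x : 'I_n -> Z8) j : \prod_i x i = x j * Qx x j.
Proof. by rewrite (bigD1 j). Qed.

Lemma decomp x : g1op a b c x = \sum_j Em j x + 2 * (\prod_i x i) * Nc.
Proof.
rewrite /g1op /Nc.
have E j : Em j x + 2 * (\prod_i x i) * ((a j)%:R + (b j)%:R)
    = 2 * (\prod_i x i) * ((a j)%:R * x j ^+ 2 + (b j)%:R * x j).
  rewrite (prodD1 x j) /Em /ee /al /be; ring.
transitivity (\sum_j (Em j x + 2 * (\prod_i x i) * ((a j)%:R + (b j)%:R))
              + 2 * (\prod_i x i) * (nat_of_ord c)%:R).
  rewrite (eq_bigr _ (fun j _ => E j)) -mulr_sumr big_split /=; ring.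
by rewrite big_split /= mulrDr mulr_sumr addrA.
Qed.

Let f := g1op a b c.

Definition upd2 (m : 'I_n) (x : 'I_n -> Z8) (u v : Z8) : 'I_n -> Z8 :=
  fun i => if i == p then u else if i == m then v else x i.
Definition Rx (m : 'I_n) (x : 'I_n -> Z8) := \prod_(i | (i != p) && (i != m)) x i.
Definition Kx (m : 'I_n) (x : 'I_n -> Z8) :=
  \sum_(i | (i != p) && (i != m)) (a i)%:R * x i ^+ 2
  + \sum_(i | (i != p) && (i != m)) (b i)%:R * x i + (nat_of_ord c)%:R.

Lemma split2P (F : 'I_n -> Z8) m :
  m != p -> \prod_i F i = F p * (F m * \prod_(i | (i != p) && (i != m)) F i).
Proof. by move=> Hm; rewrite (bigD1 p) //= (bigD1 m). Qed.

Lemma split2S (F : 'I_n -> Z8) m :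
  m != p -> \sum_i F i = F p + (F m + \sum_(i | (i != p) && (i != m)) F i).
Proof. by move=> Hm; rewrite (bigD1 p) //= (bigD1 m). Qed.

Lemma f_upd2 m x u v : m != p ->
  f (upd2 m x u v) = Rx m x * GG (a m) (b p) (b m) u v + Rx m x * Kx m x * HH u v.
Proof.
move=> Hm.
have yp : upd2 m x u v p = u by rewrite /upd2 eqxx.
have ym : upd2 m x u v m = v by rewrite /upd2 (negbTE Hm) eqxx.
have yo : forall i, (i != p) && (i != m) -> upd2 m x u v i = x i.
  by move=> i /andP[/negbTE H1 /negbTE H2]; rewrite /upd2 H1 H2.
rewrite /f /g1op (split2P _ _ Hm) !(split2S _ _ Hm) yp ym.
have yS : forall G : 'I_n -> Z8 -> Z8,
    \sum_(i | (i != p) && (i != m)) G i (upd2 m x u v i)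
    = \sum_(i | (i != p) && (i != m)) G i (x i).
  by move=> G; apply: eq_bigr => i Hi; rewrite yo.
rewrite (eq_bigr _ yo) (yS (fun i t => (a i)%:R * t ^+ 2)) (yS (fun i t => (b i)%:R * t)).
rewrite /Rx /Kx /GG /HH ap /=; ring.
Qed.

Lemma Em_R m x : m != p -> Em m x = Rx m x * (2 * x p * ee m (x m)).
Proof.
move=> Hm; rewrite /Em /Qx (bigD1 p) /=; last by rewrite eq_sym.
rewrite /Rx.
rewrite (eq_bigl (fun i => (i != p) && (i != m))); last by move=> i; rewrite andbC.
ring.
Qed.


Definition gad2 (m : 'I_n) : op n := fun x =>
  \sum_(i <- idx8) f (upd2 m x (L0 i (x p) (x m)) (L1 i (x p) (x m))) *+ lam2 (a m) (b m) i.

Lemma mulnRKH (R K G H : Z8) l : (R * G + R * K * H) *+ l = R * (G *+ l) + R * K * (H *+ l).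
Proof. by rewrite mulrnDl !mulrnAr. Qed.

Lemma gad2_val m x : m != p -> gad2 m x = Em m x.
Proof.
move=> Hm; rewrite /gad2 (Em_R _ _ Hm).
under eq_bigr => i _ do rewrite (f_upd2 _ _ _ _ Hm) mulnRKH.
rewrite big_split /= -!mulr_sumr gadG gadH.
rewrite /E1 /ee; ring.
Qed.

Lemma inC_L m i : inC f (fun x => L0 i (x p) (x m)) /\ inC f (fun x => L1 i (x p) (x m)).
Proof.
have Pp : inC f (fun x : 'I_n -> Z8 => x p) by exact: inC_proj.
have Pm : inC f (fun x : 'I_n -> Z8 => x m) by exact: inC_proj.
have P1 : inC f (fun _ : 'I_n -> Z8 => 1) by exact: (@inC_constn _ f n p 1).
have Ppm := inC_addf _ _ _ _ _ Pp Pm.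
have Pp1 := inC_addf _ _ _ _ _ Pp P1.
by case: i => [|[|[|[|[|[|[|i]]]]]]]; split; rewrite /L0 /L1 /=; try assumption.
Qed.

Lemma inC_gad2 m : inC f (gad2 m).
Proof.
apply: (@inC_bigseq _ f n p) => i _; apply: (@inC_muln _ f n p).
have [H0 H1] := inC_L m i.
pose gs : 'I_n -> op n := fun j => fun x =>
  if j == p then L0 i (x p) (x m) else if j == m then L1 i (x p) (x m) else x j.
have H : inC f (fun x => f (fun j => gs j x)).
  apply: (@inC_comp _ f n n f gs); first exact: inC_gen.
  move=> j; rewrite /gs; case: (j == p); first exact: H0.
  by case: (j == m); [exact: H1 | exact: inC_proj].
by apply: (inC_ext H) => x.
Qed.

Definition gop : op n := fun x => f x + (\sum_(m | m != p) Em m x) *+ 7.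

Lemma inC_Em m : m != p -> inC f (Em m).
Proof. move=> Hm; apply: (inC_ext (inC_gad2 m)) => x; exact: gad2_val. Qed.

Lemma inC_gop : inC f gop.
Proof.
apply: inC_addf; first exact: inC_gen.
apply: (@inC_muln _ f n p); apply: (@inC_bigseq _ f n p) => m Hm; exact: inC_Em.
Qed.

Lemma gop_val x : gop x = Qx x p * (2 * (ee p (x p) + Nc * x p)).
Proof.
rewrite /gop /f decomp (bigD1 p) //= mul7 (prodD1 x p) /Em.
ring.
Qed.

Definition upd1 (x : 'I_n -> Z8) (u : Z8) : 'I_n -> Z8 :=
  fun i => if i == p then u else x i.

Lemma gop_upd1 x u : gop (upd1 x u) = Qx x p * (2 * (ee p u + Nc * u)).
Proof.
have up : upd1 x u p = u by rewrite /upd1 eqxx.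
rewrite gop_val !up; congr (_ * _).
by rewrite /Qx; apply: eq_bigr => i Hi; rewrite /upd1 (negbTE Hi).
Qed.

Lemma ee_p u : ee p u = al u + (b p)%:R * be u.
Proof. by rewrite /ee ap /= mul1r. Qed.

Definition tg : op n := fun x =>
  \sum_(i <- idx5) gop (upd1 x (Lu i (x p))) *+ lam1 Nc (b p) i.

Lemma tg_val x : tg x = 2 * Qx x p * Targ Nc (x p).
Proof.
rewrite /tg; under eq_bigr => i _ do rewrite gop_upd1 ee_p -mulrnAr.
rewrite -mulr_sumr gadU; ring.
Qed.

Lemma inC_Lu i : inC f (fun x => Lu i (x p)).
Proof.
have Pp : inC f (fun x : 'I_n -> Z8 => x p) by exact: inC_proj.
have P1 : inC f (fun _ : 'I_n -> Z8 => 1) by exact: (@inC_constn _ f n p 1).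
have Pp1 := inC_addf _ _ _ _ _ Pp P1.
have Ppp := inC_addf _ _ _ _ _ Pp Pp.
have Pppp := inC_addf _ _ _ _ _ Ppp Pp.
by case: i => [|[|[|[|i]]]]; rewrite /Lu /=; try assumption.
Qed.

Lemma inC_tg : inC f tg.
Proof.
apply: (@inC_bigseq _ f n p) => i _; apply: (@inC_muln _ f n p).
pose gs : 'I_n -> op n := fun j => fun x => if j == p then Lu i (x p) else x j.
have H : inC f (fun x => gop (fun j => gs j x)).
  apply: (@inC_comp _ f n n gop gs); first exact: inC_gop.
  by move=> j; rewrite /gs; case: (j == p); [exact: inC_Lu | exact: inC_proj].
by apply: (inC_ext H) => x.
Qed.

Lemma inC_tg0 (o : 'I_n) : inC f (fun x => 2 * Qx x o * Targ Nc (x o)).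
Proof.
pose s := tperm p o.
have H : inC f (fun x => tg (fun j => (fun y : 'I_n -> Z8 => y (s j)) x)).
  apply: (@inC_comp _ f n n tg (fun j => fun y => y (s j))); first exact: inC_tg.
  by move=> j; exact: inC_proj.
apply: (inC_ext H) => x /=.
rewrite tg_val /s tpermL; congr (2 * _ * _).
rewrite /Qx; symmetry; rewrite (reindex_inj (@perm_inj _ (tperm p o))) /=.
apply: eq_bigl => i.
by rewrite (can2_eq (tpermK p o) (tpermK p o)) tpermR.
Qed.

End Main.

Theorem lemma4p4 (n : nat) (hn : (0 < n)%N) (a b : 'I_n -> bool) (c : 'I_4) :
  (exists i, a i) ->
  inC (g1op a b c) (fun x => 2 * w_op (Ordinal hn) x) \/
  inC (g1op a b c) (fun x => 2 * q_op (Ordinal hn) x).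
Proof.
move=> [p ap].
have H := @inC_tg0 n a b c p ap (Ordinal hn).
case Hodd: (odd (@Nc n a b c)).
- right; apply: (inC_ext H) => x.
  by rewrite /Targ Hodd /q_op /Qx; ring.
- left; apply: (inC_ext H) => x.
  by rewrite /Targ Hodd /w_op (@prodD1 n x (Ordinal hn)) /Qx; ring.
Qed.
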